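(* Assume only upper-bound group constraints and $\mathcal S\neq\emptyset$. Let $\lambda:\mathcal U\to\mathbb R$. There exists a probability distribution $D$ over $\mathcal S$ with $D[u]\ge\lambda_u$ for all $u\in\mathcal U$ if and only if $$\max_{r\in\mathcal S}\sum_{u\in X}V(r,u)\ \ge\ \sum_{u\in X}\lambda_u\qquad\text{for all } X\subseteq\mathcal U.$$
   Context: Ranking setting: $\mathcal U=\{u_1,\dots,u_n\}$ finite set of individuals partitioned into groups $C_1,\dots,C_t$; rankings are bijections $r:\mathcal U\to[n]$. Only upper bounds: $\mathcal S=\{r:\ |\{u\in C_k: r(u)\le i\}|\le u_i^k\ \forall i\in[n],k\in[t]\}$ for given integers $u_i^k$. $V(r,u)=f(r(u))-g(u)$ with $f:[n]\to\mathbb R$ non-increasing and $g:\mathcal U\to\mathbb R$ arbitrary. For a distribution $D$ over $\mathcal S$, $D[u]=\mathbb E_{r\sim D}[V(r,u)]$. *)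

(* Defs.v *)
From HB Require Import structures.
From mathcomp Require Import all_boot all_order all_algebra.
From mathcomp Require Import reals.
Set Implicit Arguments. Unset Strict Implicit. Unset Printing Implicit Defensive.
Import Order.TTheory GRing.Theory Num.Theory.
Local Open Scope ring_scope.

(* A ranking is a bijection U -> [n]; we represent it as a finite function
   r : U -> 'I_#|U| that is injective (hence bijective by cardinality);
   the rank of u (in 1..n) is (r u).+1. *)
Definition ranking (U : finType) := {ffun U -> 'I_#|U|}.

Definition is_ranking (U : finType) (r : ranking U) : bool := injectiveb r.

Definition rank (U : finType) (r : ranking U) (u : U) : nat := (r u).+1.

(* Groups C_1..C_t given by grp : U -> 'I_t; upper bounds ub i k = u_i^k.
   S = rankings with |{u in C_k : r(u) <= i}| <= u_i^k for all i in [n], k. *)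
Definition in_S (U : finType) (t : nat) (grp : U -> 'I_t) (ub : nat -> 'I_t -> int)
  (r : ranking U) : bool :=
  is_ranking r &&
  [forall i : 'I_#|U|, forall k : 'I_t,
     (#|[set u | (grp u == k) && (rank r u <= i.+1)%N]|%:Z <= ub i.+1 k)%R].

Definition V (R : realType) (U : finType) (f : nat -> R) (g : U -> R)
  (r : ranking U) (u : U) : R := f (rank r u) - g u.

Definition is_distr_on_S (R : realType) (U : finType) (S : pred (ranking U))
  (D : {ffun ranking U -> R}) : Prop :=
  (forall r, 0 <= D r) /\ (forall r, ~~ S r -> D r = 0) /\ (\sum_r D r = 1).

Definition expV (R : realType) (U : finType) (f : nat -> R) (g : U -> R)
  (D : {ffun ranking U -> R}) (u : U) : R := \sum_r D r * V f g r u.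

(* Main.v *)
Require Import Defs.
From HB Require Import structures.
From mathcomp Require Import all_boot all_order all_algebra reals.
From mathcomp Require Import perm.
From mathcomp Require Import ring lra zify.
Set Implicit Arguments. Unset Strict Implicit. Unset Printing Implicit Defensive.
Import Order.TTheory GRing.Theory Num.Theory.
Local Open Scope ring_scope.
Section Farkas.
Variable R : realType.

Definition delta (J : finType) (j i : J) : R := (i == j)%:R.

Lemma sum_delta (J : finType) (j : J) (F : J -> R) :
  \sum_i delta j i * F i = F j.
Proof.
rewrite (bigD1 j) //= big1 /delta ?eqxx ?mul1r ?addr0 // => i /negbTE ->.
by rewrite mul0r.
Qed.

Lemma compose (J J' : finType) (P : pred J) (P' : pred J') (d : J' -> J -> R)
  (c' : J' -> R) :
  (forall j', 0 <= c' j') -> (forall j', ~~ P' j' -> c' j' = 0) ->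
  (forall j', P' j' -> (forall i, 0 <= d j' i) /\ (forall i, ~~ P i -> d j' i = 0)
      /\ \sum_i d j' i = 1) ->
  [/\ forall i, 0 <= \sum_j' c' j' * d j' i,
      forall i, ~~ P i -> \sum_j' c' j' * d j' i = 0,
      \sum_i \sum_j' c' j' * d j' i = \sum_j' c' j' &
      forall F : J -> R, \sum_i (\sum_j' c' j' * d j' i) * F i =
         \sum_j' c' j' * \sum_i d j' i * F i].
Proof.
move=> c0 cP hd.
have gen : forall F : J -> R, \sum_i (\sum_j' c' j' * d j' i) * F i =
         \sum_j' c' j' * \sum_i d j' i * F i.
  move=> F; under eq_bigr do rewrite mulr_suml.
  rewrite exchange_big; apply: eq_bigr => j' _.
  by rewrite mulr_sumr; apply: eq_bigr => i _; rewrite mulrA.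
split => //.
- move=> i; apply: sumr_ge0 => j' _.
  case: (boolP (P' j')) => hP; last by rewrite cP // mul0r.
  have [h1 _] := hd _ hP; exact: mulr_ge0.
- move=> i hi; apply: big1 => j' _.
  case: (boolP (P' j')) => hP; last by rewrite cP // mul0r.
  have [_ [h2 _]] := hd _ hP; by rewrite h2 // mulr0.
- transitivity (\sum_i (\sum_j' c' j' * d j' i) * (fun _ => 1) i).
    by apply: eq_bigr => i _; rewrite mulr1.
  rewrite gen; apply: eq_bigr => j' _.
  case: (boolP (P' j')) => hP; last by rewrite cP // !mul0r.
  have [_ [_ h3]] := hd _ hP.
  by under eq_bigr do rewrite mulr1; rewrite h3 mulr1.
Qed.

End Farkas.
Section Farkas2.
Variable R : realType.

Lemma farkas (U : finType) (n : nat) : forall (X : {set U}), #|X| = n ->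
  forall (J : finType) (P : pred J) (A : J -> U -> R),
  (forall w : U -> R, (forall u, 0 <= w u) ->
     exists2 j, P j & 0 <= \sum_(u in X) w u * A j u) ->
  exists c : J -> R, [/\ forall j, 0 <= c j, forall j, ~~ P j -> c j = 0,
     \sum_j c j = 1 & forall u, u \in X -> 0 <= \sum_j c j * A j u].
Proof.
elim: n => [|n IH] X hX J P A H.
  have [j0 Pj0 _] := H (fun _ => 0) (fun _ => lexx 0).
  exists (fun j => delta R j0 j); split.
  - by move=> j; rewrite /delta ler0n.
  - by move=> j hj; rewrite /delta; case: eqP => // e; rewrite e Pj0 in hj.
  - by rewrite -(sum_delta j0 (fun _ => 1)); apply: eq_bigr => i _; rewrite mulr1.
  - by move=> u; rewrite (cards0_eq hX) in_set0.
have [u0 u0X] : exists u0, u0 \in X.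
  by apply/set0Pn; rewrite -card_gt0 hX.
set X' := X :\ u0.
have hX' : #|X'| = n by move: hX; rewrite (cardsD1 u0) u0X add1n => -[].
pose J' := (J + (J * J))%type.
pose den j k := A j u0 - A k u0.
pose al j k := - A k u0 / den j k.
pose be j k := A j u0 / den j k.
pose P' (j' : J') := match j' with inl j => P j && (0 <= A j u0)
   | inr (j, k) => [&& P j, P k, 0 < A j u0 & A k u0 < 0] end.
pose d (j' : J') (i : J) : R := match j' with inl j => delta R j i
   | inr (j, k) => al j k * delta R j i + be j k * delta R k i end.
pose A' (j' : J') u := \sum_i d j' i * A i u.
have pairP : forall j k, 0 < A j u0 -> A k u0 < 0 ->
   [/\ 0 < den j k, 0 < al j k, 0 < be j k, al j k + be j k = 1 &
       al j k * A j u0 + be j k * A k u0 = 0].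
  move=> j k h1 h2; have dp : 0 < den j k by rewrite /den; lra.
  have dn : den j k != 0 by rewrite gt_eqF.
  split => //; rewrite /al /be.
  - by apply: divr_gt0 => //; lra.
  - exact: divr_gt0.
  - by rewrite -mulrDl addrC mulfV.
  - by field.
have dsum : forall j' (F : J -> R), \sum_i d j' i * F i =
   match j' with inl j => F j | inr (j, k) => al j k * F j + be j k * F k end.
  move=> [j|[j k]] F; first exact: sum_delta.
  rewrite /d /=; under eq_bigr do rewrite mulrDl -(mulrA (al j k)) -(mulrA (be j k)).
  by rewrite big_split /= -!mulr_sumr !sum_delta.
have hd : forall j', P' j' -> (forall i, 0 <= d j' i) /\
     (forall i, ~~ P i -> d j' i = 0) /\ \sum_i d j' i = 1.
  move=> [j|[j k]] /=.
    move=> /andP[Pj _]; split; first by move=> i; rewrite /delta ler0n.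
    split; first by move=> i hi; rewrite /delta; case: eqP => // e; rewrite e Pj in hi.
    by rewrite -(sum_delta j (fun _ => 1)); apply: eq_bigr => i _; rewrite mulr1.
  move=> /and4P[Pj Pk h1 h2]; have [_ a0 b0 ab _] := pairP _ _ h1 h2.
  split.
    by move=> i; rewrite /delta addr_ge0 // mulr_ge0 ?ler0n // ltW.
  split.
    move=> i hi; rewrite /delta.
    case: eqP => e; first by rewrite e Pj in hi.
    case: eqP => e'; first by rewrite e' Pk in hi.
    by rewrite !mulr0 addr0.
  transitivity (\sum_i d (inr (j, k)) i * (fun _ => 1) i).
    by apply: eq_bigr => i _; rewrite mulr1.
  by rewrite dsum !mulr1.
have A'u0 : forall j', P' j' -> 0 <= A' j' u0.
  move=> [j|[j k]] /=; rewrite /A' dsum; first by case/andP.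
  move=> /and4P[Pj Pk h1 h2]; have [_ _ _ _ ->] := pairP _ _ h1 h2; exact: lexx.
pose L (w : U -> R) i := \sum_(u in X') w u * A i u.
have LA' : forall w j', \sum_(u in X') w u * A' j' u =
   match j' with inl j => L w j | inr (j, k) => al j k * L w j + be j k * L w k end.
  move=> w j'; rewrite /A'.
  under eq_bigr do rewrite mulr_sumr.
  rewrite exchange_big /=.
  under eq_bigr do (under eq_bigr do rewrite mulrCA; rewrite -mulr_sumr).
  by rewrite (dsum j' (L w)).
have H' : forall w : U -> R, (forall u, 0 <= w u) ->
     exists2 j', P' j' & 0 <= \sum_(u in X') w u * A' j' u.
  move=> w wpos.
  case: (boolP [exists j', P' j' && (0 <= \sum_(u in X') w u * A' j' u)]).
    by move=> /existsP[j' /andP[h1 h2]]; exists j'.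
  rewrite negb_exists => /forallP hneg.
  have hn : forall j', P' j' -> \sum_(u in X') w u * A' j' u < 0.
    by move=> j' hP; have := hneg j'; rewrite hP /= -ltNge.
  have hL0 : forall j, P j -> 0 <= A j u0 -> L w j < 0.
    move=> j Pj h; have := hn (inl j); rewrite LA' /=; apply; by rewrite Pj h.
  have hpair : forall j k, P j -> P k -> 0 < A j u0 -> A k u0 < 0 ->
      L w k / - A k u0 < - L w j / A j u0.
    move=> j k Pj Pk h1 h2.
    have := hn (inr (j, k)); rewrite LA' /= Pj Pk h1 h2 => /(_ isT).
    rewrite /al /be /den mulrAC [be _ _ * _]mulrAC -mulrDl pmulr_llt0; last first.
      by rewrite invr_gt0; lra.
    move=> hlt.
    set x := L w k / - A k u0; set y := - L w j / A j u0.
    have hx : x * (- A k u0) = L w k by rewrite /x divfK // oppr_eq0 lt_eqF.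
    have hy : y * A j u0 = - L w j by rewrite /y divfK // gt_eqF.
    have hab : 0 < A j u0 * - A k u0 by apply: mulr_gt0; lra.
    nra.
  pose M := \big[Order.max/0]_(k | P k && (A k u0 < 0)) (L w k / - A k u0).
  pose mn := \big[Order.min/1]_(j | P j && (0 < A j u0)) (- L w j / A j u0 - M).
  have M0 : 0 <= M by apply: bigmax_ge_id.
  have mn0 : 0 < mn.
    apply: lt_bigmin => // j /andP[Pj hj]; rewrite subr_gt0.
    apply: bigmax_lt => [|k /andP[Pk hk]]; last exact: hpair.
    by apply: divr_gt0 => //; rewrite oppr_gt0; apply: hL0 => //; apply: ltW.
  pose w0 := M + mn / 2.
  pose w'' u := if u == u0 then w0 else w u.
  have w''0 : forall u, 0 <= w'' u.
    by move=> u; rewrite /w''; case: eqP => _ //; rewrite /w0; lra.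
  have [j Pj] := H w'' w''0.
  rewrite (bigD1 u0) //= {1}/w'' eqxx.
  have -> : \sum_(u in X | u != u0) w'' u * A j u = L w j.
    rewrite /L; apply: eq_big => [u|u /andP[_ hu]]; first by rewrite in_setD1 andbC.
    by rewrite /w'' (negbTE hu).
  case: (ltgtP (A j u0) 0) => hj.
  - have hM : L w j / - A j u0 <= M by apply: le_bigmax_cond; rewrite Pj hj.
    rewrite ler_pdivrMr ?oppr_gt0 // in hM.
    have : M < w0 by rewrite /w0; lra.
    nra.
  - have hm : mn <= - L w j / A j u0 - M by apply: bigmin_le_cond; rewrite Pj hj.
    have : w0 < - L w j / A j u0 by rewrite /w0; lra.
    rewrite ltr_pdivlMr //; lra.
  - by rewrite hj mulr0 add0r; have := hL0 j Pj; rewrite hj lexx => /(_ isT); lra.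
have [c' [c'0 c'P c'1 c'X]] := IH X' hX' J' P' A' H'.
have [c0 cP c1 cF] := compose c'0 c'P hd.
exists (fun i => \sum_j' c' j' * d j' i); split => //; first by rewrite c1.
move=> u uX; rewrite cF.
case: (eqVneq u u0) => [->|neu].
  apply: sumr_ge0 => j' _; case: (boolP (P' j')) => hP; last by rewrite c'P // mul0r.
  exact: mulr_ge0 (c'0 _) (A'u0 _ hP).
by apply: c'X; rewrite in_setD1 neu.
Qed.

End Farkas2.
Section Comb.
Variables (R : realType) (U : finType) (t : nat) (grp : U -> 'I_t)
  (ub : nat -> 'I_t -> int).

Definition cnt (r : ranking U) k (i : nat) :=
  #|[set x | (grp x == k) && (r x < i)%N]|.

Lemma card_sum (T : finType) (P : pred T) : #|[set x | P x]| = (\sum_x (P x : nat))%N.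
Proof.
rewrite -sum1_card big_mkcond /=; apply: eq_bigr => x _; rewrite inE.
by case: (P x).
Qed.

Lemma inS_cnt r k j : in_S grp ub r -> (0 < j <= #|U|)%N -> (cnt r k j)%:Z <= ub j k.
Proof.
move=> /andP[_ /forallP H] /andP[j0 jn].
have jn' : (j.-1 < #|U|)%N by rewrite prednK.
have := H (Ordinal jn') => /forallP /(_ k) /=.
by rewrite prednK.
Qed.

Lemma inS_intro r : is_ranking r ->
  (forall k j, (0 < j <= #|U|)%N -> (cnt r k j)%:Z <= ub j k) -> in_S grp ub r.
Proof.
move=> hr H; apply/andP; split => //; apply/forallP => i; apply/forallP => k.
exact: (H k i.+1 (ltn_ord i)).
Qed.

Lemma sum2n (T : finType) (F : T -> nat) (a b : T) : a != b ->
  (\sum_x F x = F a + F b + \sum_(x | (x != a) && (x != b)) F x)%N.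
Proof.
move=> nab; rewrite (bigD1 a) //= (bigD1 b) /=; last by rewrite eq_sym.
by rewrite addnA; congr (_ + _)%N; apply: eq_bigl => x; rewrite andbC.
Qed.

Lemma sum2r (T : finType) (F : T -> R) (a b : T) : a != b ->
  \sum_x F x = F a + F b + \sum_(x | (x != a) && (x != b)) F x.
Proof.
move=> nab; rewrite (bigD1 a) //= (bigD1 b) /=; last by rewrite eq_sym.
by rewrite addrA; congr (_ + _); apply: eq_bigl => x; rewrite andbC.
Qed.

Definition sw (r : ranking U) (a b : U) : ranking U := [ffun x => r (tperm a b x)].

Lemma sw_rank r a b : is_ranking r -> is_ranking (sw r a b).
Proof.
move=> /injectiveP hr; apply/injectiveP => x y; rewrite !ffunE => /hr.
exact: perm_inj.
Qed.

Lemma sw_cnt (r : ranking U) (a b : U) k (i : nat) : (r b < r a)%N ->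
  (cnt (sw r a b) k i <= cnt r k i +
     [&& grp a == k, grp b != k, (r b < i)%N & (i <= r a)%N])%N.
Proof.
move=> hab.
have nab : a != b by apply/eqP => e; rewrite e ltnn in hab.
rewrite /cnt !card_sum.
rewrite (reindex_inj (perm_inj (s := tperm a b))) /=.
under eq_bigr do rewrite ffunE tpermK.
rewrite !(sum2n _ nab) tpermL tpermR.
have -> : (\sum_(x | (x != a) && (x != b)) ((grp (tperm a b x) == k) && (r x < i)) =
    \sum_(x | (x != a) && (x != b)) ((grp x == k) && (r x < i)))%N.
  by apply: eq_bigr => x /andP[xa xb]; rewrite tpermD // eq_sym.
move: hab; case: (grp a == k); case: (grp b == k) => /=;
  case: (ltnP (r a) i); case: (ltnP (r b) i) => //=; lia.
Qed.

Lemma sw_inS (r : ranking U) (a b : U) : in_S grp ub r -> (r b < r a)%N ->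
  (forall j, grp b != grp a -> (r b < j <= r a)%N ->
      (cnt r (grp a) j + 1)%:Z <= ub j (grp a)) ->
  in_S grp ub (sw r a b).
Proof.
move=> hS hab hw; apply: inS_intro; first by apply: sw_rank; case/andP: hS.
move=> k j hj.
have := sw_cnt k j hab.
case: (boolP [&& grp a == k, grp b != k, (r b < j)%N & (j <= r a)%N]).
  move=> /and4P[/eqP e hb h1 h2] hle; rewrite -e.
  apply: le_trans (hw j _ _); last by rewrite h1 h2.
    2: by rewrite e.
  by rewrite lez_nat; move: hle; rewrite -e /=; lia.
move=> _; rewrite addn0 => hle; apply: le_trans (inS_cnt k hS hj).
by rewrite lez_nat.
Qed.

Variable w : U -> R.
Definition Phi (r : ranking U) := - \sum_x w x * (r x)%:R.

Lemma Phi_sw (r : ranking U) (a b : U) : a != b ->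
  Phi (sw r a b) = Phi r + (w a - w b) * ((r a)%:R - (r b)%:R).
Proof.
move=> nab; rewrite /Phi !(sum2r _ nab) !ffunE tpermL tpermR.
have -> : \sum_(x | (x != a) && (x != b)) w x * (sw r a b x)%:R =
    \sum_(x | (x != a) && (x != b)) w x * (r x)%:R.
  by apply: eq_bigr => x /andP[xa xb]; rewrite ffunE tpermD // eq_sym.
ring.
Qed.


Lemma exminn (T : finType) (P : pred T) (F : T -> nat) x0 : P x0 ->
  exists2 x, P x & forall y, P y -> (F x <= F y)%N.
Proof. move=> P0; case: (arg_minnP F P0) => x Px H; by exists x. Qed.

Lemma rank_bij (r : ranking U) : is_ranking r -> bijective r.
Proof. move=> /injectiveP hr; apply: (inj_card_bij hr); by rewrite card_ord. Qed.

Lemma slot_ex (r : ranking U) j : is_ranking r -> (j < #|U|)%N ->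
  exists b, r b = j :> nat.
Proof.
move=> /rank_bij [ri K1 K2] hj; exists (ri (Ordinal hj)); by rewrite K2.
Qed.

Definition top (r : ranking U) (th : R) (i : nat) :=
  #|[set x | (th <= w x) && (r x < i)%N]|.
Definition topg (r : ranking U) (th : R) g (i : nat) :=
  #|[set x | (grp x == g) && ((th <= w x) && (r x < i)%N)]|.

Lemma top_split r th i : top r th i = (\sum_g topg r th g i)%N.
Proof.
rewrite /top /topg card_sum.
under [in RHS]eq_bigr do rewrite card_sum.
rewrite exchange_big /=; apply: eq_bigr => x _.
rewrite (bigD1 (grp x)) //= eqxx /= big1 ?addn0 // => k /negbTE hk.
by rewrite eq_sym hk.
Qed.

Lemma Phi_sort (rs : ranking U) : in_S grp ub rs ->
  (forall r, in_S grp ub r -> Phi r <= Phi rs) ->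
  forall a b, grp a = grp b -> w b < w a -> (rs a < rs b)%N.
Proof.
move=> hS hmax a b gab wab.
case: (ltngtP (rs a) (rs b)) => // h.
  have nab : a != b by apply/eqP => e; rewrite e ltxx in wab.
  have hS' : in_S grp ub (sw rs a b).
    by apply: sw_inS => // j; rewrite gab eqxx.
  have := hmax _ hS'; rewrite Phi_sw //.
  have : 0 < (w a - w b) * ((rs a)%:R - (rs b)%:R).
    by apply: mulr_gt0; rewrite subr_gt0 // ltr_nat.
  lra.
have hr : injective rs by apply/injectiveP; case/andP: hS.
have e : rs a = rs b by apply: val_inj.
by rewrite (hr _ _ e) ltxx in wab.
Qed.

Lemma top_opt (rs : ranking U) : in_S grp ub rs ->
  (forall r, in_S grp ub r -> Phi r <= Phi rs) ->
  forall r', in_S grp ub r' -> forall th i, (top r' th i <= top rs th i)%N.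
Proof.
move=> hS hmax r' hS' th i.
have hrs : is_ranking rs by case/andP: hS.
have hr' : is_ranking r' by case/andP: hS'.
have sort := Phi_sort hS hmax.
elim/ltn_ind: i => i IH; rewrite leqNgt; apply/negP => hlt.
have [g hg] : exists g, (topg rs th g i < topg r' th g i)%N.
  case: (boolP [exists g, (topg rs th g i < topg r' th g i)%N]).
    by move=> /existsP.
  rewrite negb_exists => /forallP hn.
  move: hlt; rewrite !top_split ltnNge leq_sum //.
  by move=> k _; have := hn k; rewrite -leqNgt.
have i0 : (0 < i)%N.
  case: i {IH hlt} hg => // ; rewrite /topg.
  have -> : [set x | (grp x == g) && ((th <= w x) && (r' x < 0)%N)] = set0.
    by apply/setP => x; rewrite !inE ltn0 !andbF.
  by rewrite cards0.
have [a0 [ga0 wa0 ia0]] : exists a0, [/\ grp a0 == g, th <= w a0 & (i <= rs a0)%N].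
  case: (boolP [exists a0, [&& grp a0 == g, th <= w a0 & (i <= rs a0)%N]]).
    by move=> /existsP[a0 /and3P[h1 h2 h3]]; exists a0.
  rewrite negb_exists => /forallP hn; exfalso; move: hg; apply/negP; rewrite -leqNgt.
  apply: subset_leq_card; apply/subsetP => x; rewrite !inE => /and3P[h1 h2 h3].
  rewrite h1 h2 /=; have := hn x; rewrite h1 h2 /= -ltnNge; exact.
pose Pa x := (grp x == g) && (i <= rs x)%N.
have [a /andP[ga ia] amin] := exminn (fun x => nat_of_ord (rs x)) (introT andP (conj ga0 ia0) : Pa a0).
have wa : th <= w a.
  rewrite leNgt; apply/negP => wlt.
  have := amin a0; rewrite /Pa ga0 ia0 => /(_ isT).
  have := sort a0 a; rewrite (eqP ga) (eqP ga0) => /(_ erefl); rewrite (lt_le_trans wlt wa0).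
  by move=> /(_ isT) h1 h2; lia.
set q := nat_of_ord (rs a).
have qn : (q < #|U|)%N by rewrite /q.
have gX : forall x, grp x == g -> (rs x < i)%N -> th <= w x.
  move=> x gx xi; rewrite leNgt; apply/negP => wlt.
  have := sort a x; rewrite (eqP ga) (eqP gx) => /(_ erefl (lt_le_trans wlt wa)).
  move: xi ia; rewrite -/q; lia.
have cnt_i : cnt rs g i = topg rs th g i.
  rewrite /cnt /topg; apply: eq_card => x; rewrite !inE.
  case gx: (grp x == g) => //=; case xi: (rs x < i)%N; rewrite ?andbF ?andbT //.
  by rewrite (gX x gx xi).
have cnt_j : forall j, (i <= j <= q)%N -> cnt rs g j = cnt rs g i.
  move=> j /andP[ij jq]; rewrite /cnt; apply: eq_card => x; rewrite !inE.
  case gx: (grp x == g) => //=; case xi: (rs x < i)%N.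
    by apply: leq_trans xi ij.
  apply/negP => xj; have := amin x; rewrite /Pa gx leqNgt xi /= => /(_ isT).
  rewrite -/q; move: xj jq; lia.
have ok : forall j, (i <= j <= q)%N -> (cnt rs g j + 1)%:Z <= ub j g.
  move=> j hj; rewrite (cnt_j j hj) cnt_i.
  apply: le_trans (inS_cnt g hS' _); last first.
    by case/andP: hj => ij jq; apply/andP; split; [apply: leq_trans ij|apply: leq_trans (ltnW qn)].
  rewrite lez_nat addn1; apply: leq_trans hg _.
  rewrite /topg /cnt; apply: subset_leq_card; apply/subsetP => x; rewrite !inE.
  move=> /and3P[-> _ h] /=; case/andP: hj => ij _; exact: leq_trans h ij.
have [b hb] := slot_ex hrs (leq_ltn_trans (leq_pred i) (leq_ltn_trans ia qn)).
case: (ltP (w b) (w a)) => wb.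
  have hbq : (rs b < rs a)%N by rewrite hb -/q; move: ia i0; lia.
  have nab : a != b by apply/eqP => e; rewrite e ltxx in wb.
  have hS2 : in_S grp ub (sw rs a b).
    apply: sw_inS => // j _ hj; rewrite (eqP ga); apply: ok.
    move: hj; rewrite hb -/q; move: i0; lia.
  have := hmax _ hS2; rewrite Phi_sw //.
  have : 0 < (w a - w b) * ((rs a)%:R - (rs b)%:R).
    by apply: mulr_gt0; rewrite subr_gt0 // ltr_nat.
  lra.
have wbt : th <= w b := le_trans wa wb.
have hi1 : (i.-1 < i)%N by move: i0; lia.
have := IH i.-1 hi1.
have [b' hb'] := slot_ex hr' (leq_ltn_trans (leq_pred i) (leq_ltn_trans ia qn)).
have e1 : (top r' th i <= top r' th i.-1 + 1)%N.
  apply: (@leq_trans #|[set x | (th <= w x) && (r' x < i.-1)%N] :|: [set b']|); last first.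
    by apply: leq_trans (leq_card_setU _ _).1 _; rewrite cards1.
  apply: subset_leq_card.
  apply/subsetP => x; rewrite !inE => /andP[-> xi] /=.
  case: (ltnP (r' x) i.-1) => //= h; apply/eqP.
  have : r' x = r' b'.
    by apply: ord_inj; rewrite hb'; apply/eqP; rewrite eqn_leq h andbT -ltnS (prednK i0).
  by move/injectiveP: hr' => hi /hi.
have e2 : top rs th i = (top rs th i.-1 + 1)%N.
  have -> : top rs th i = #|b |: [set x | (th <= w x) && (rs x < i.-1)%N]|.
    rewrite /top; apply: eq_card => x; rewrite !inE.
  case: (eqVneq x b) => [->|nxb]; first by rewrite wbt hb hi1.
  rewrite /=; case: (th <= w x) => //=.
  apply/idP/idP => h; last by apply: leq_trans h (leq_pred i).
  case: (ltnP (rs x) i.-1) => // h2; exfalso.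
  have : rs x = rs b.
    by apply: ord_inj; rewrite hb; apply/eqP; rewrite eqn_leq h2 andbT -ltnS (prednK i0).
  by move/injectiveP: hrs => hi /hi e; rewrite e eqxx in nxb.
  by rewrite cardsU1 !inE hb ltnn andbF addnC /top.
move: hlt e1 e2; lia.
Qed.

End Comb.
Section Abel.
Variable R : realType.

Lemma exmax (T : finType) (P : pred T) (F : T -> R) x0 : P x0 ->
  exists2 x, P x & forall y, P y -> F y <= F x.
Proof. move=> P0. case: (@arg_maxP _ R T x0 P F P0) => x Px H. by exists x. Qed.

Lemma abel (T : finType) (n : nat) : forall (w a : T -> R),
  (#|[set u | (0 < w u)%R]| <= n)%N -> (forall u, 0 <= w u) ->
  (forall th, 0 <= \sum_(u | th <= w u) a u) -> 0 <= \sum_u w u * a u.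
Proof.
elim: n => [|n IH] w a hn hw ha.
  rewrite big1 // => u _.
  have : u \notin [set u | 0 < w u] by apply/negP => h; move: hn; rewrite (cardD1 u) h.
  rewrite inE -leNgt => h; have -> : w u = 0 by apply/eqP; rewrite eq_le h hw.
  by rewrite mul0r.
case: (boolP [exists u, 0 < w u]); last first.
  rewrite negb_exists => /forallP hz; rewrite big1 // => u _.
  have := hz u; rewrite -leNgt => h; have -> : w u = 0 by apply/eqP; rewrite eq_le h hw.
  by rewrite mul0r.
move=> /existsP[u1 hu1].
have [u0 hu0 hmin] := exmax (P := fun u => 0 < w u) (fun u => - w u) hu1.
set mu := w u0.
have hmin' : forall u, 0 < w u -> mu <= w u.
  by move=> u hu; have := hmin u hu; rewrite lerN2.
pose w' u := if mu <= w u then w u - mu else 0.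
have hw' : forall u, 0 <= w' u.
  by move=> u; rewrite /w'; case: ifP => // h; rewrite subr_ge0.
have hdec : \sum_u w u * a u =
    mu * \sum_(u | mu <= w u) a u + \sum_u w' u * a u.
  rewrite mulr_sumr [X in _ = X + _]big_mkcond /= -big_split /=; apply: eq_bigr => u _.
  rewrite /w'; case: ifP => h; first by ring.
  have : w u = 0.
    apply/eqP; rewrite eq_le hw andbT leNgt; apply/negP => hp.
    by rewrite hmin' in h.
  by move=> ->; rewrite !mul0r addr0.
rewrite hdec; apply: addr_ge0; first by apply: mulr_ge0 => //; apply: ltW.
apply: IH => //.
- have hsub : [set u | 0 < w' u] \proper [set u | 0 < w u].
    apply/properP; split.
      apply/subsetP => u; rewrite !inE /w'; case: ifP => h; last by rewrite ltxx.
      by rewrite subr_gt0 => h'; exact: lt_trans hu0 h'.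
    exists u0; rewrite !inE //.
    by rewrite /w' lexx subrr ltxx.
  by have := proper_card hsub; move: hn; lia.
- move=> th; case: (lerP th 0) => hth.
    have := ha th; congr (0 <= _); apply: eq_bigl => u.
    by rewrite (le_trans hth (hw u)) (le_trans hth (hw' u)).
  have := ha (th + mu); congr (0 <= _); apply: eq_bigl => u.
  rewrite /w'; case: ifP => h.
    by rewrite lerBrDr.
  move/negbT: h; rewrite -ltNge => h.
  have hm : 0 < mu by [].
  by apply/idP/idP => h2; lra.
Qed.

End Abel.
Section Fsum.
Variables (R : realType) (n : nat) (f : nat -> R).

Lemma fexp m : (0 < m <= n)%N ->
  f m = f n + \sum_(1 <= j < n) (f j - f j.+1) * (m <= j)%:R.
Proof.
move=> /andP[m0 mn].
rewrite (@big_cat_nat _ _ _ m) //= big_nat_cond big1; last first.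
  by move=> j /andP[/andP[_ jm] _]; rewrite leqNgt jm mulr0.
rewrite add0r (@eq_big_nat _ _ _ m n _ (fun j => f j - f j.+1)); last first.
  by move=> j /andP[mj _]; rewrite mj mulr1.
under eq_bigr do rewrite -opprB.
rewrite sumrN telescope_sumr //; ring.
Qed.

End Fsum.

Section Main.
Variables (R : realType) (U : finType) (t : nat) (grp : U -> 'I_t)
  (ub : nat -> 'I_t -> int) (f : nat -> R) (w : U -> R).

Lemma fsum (r : ranking U) th :
  \sum_(u | th <= w u) f (rank r u) =
  \sum_(u | th <= w u) f #|U| +
  \sum_(1 <= j < #|U|) (f j - f j.+1) * (top w r th j)%:R.
Proof.
rewrite (eq_bigr (fun u => f #|U| + \sum_(1 <= j < #|U|) (f j - f j.+1) * (rank r u <= j)%:R)); last first.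
  by move=> u _; apply: fexp; rewrite /rank /= ltn_ord.
rewrite big_split /=; congr (_ + _).
rewrite exchange_big /=; apply: eq_bigr => j _.
rewrite -mulr_sumr -natr_sum; congr (_ * _%:R).
rewrite /top card_sum big_mkcond /=; apply: eq_bigr => u _.
by case: (th <= w u).
Qed.

Lemma fcompare (rs r : ranking U) th :
  {in [pred i | (0 < i <= #|U|)%N] &, {homo f : i j / (i <= j)%N >-> j <= i}} ->
  (forall j, (top w r th j <= top w rs th j)%N) ->
  \sum_(u | th <= w u) f (rank r u) <= \sum_(u | th <= w u) f (rank rs u).
Proof.
move=> hf ht; rewrite !fsum lerD2l; apply: ler_sum_nat => j /andP[j1 jn].
apply: ler_wpM2l; last by rewrite ler_nat.
rewrite subr_ge0; apply: hf => //; rewrite inE /=.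
  by rewrite j1 ltnW.
Qed.

End Main.
Unset Implicit Arguments.

Theorem lemma2 (R : realType) (U : finType) (t : nat) (grp : U -> 'I_t)
  (ub : nat -> 'I_t -> int) (f : nat -> R) (g : U -> R) (lambda : U -> R) :
  {in [pred i | (0 < i <= #|U|)%N] &, {homo f : i j / (i <= j)%N >-> j <= i}} ->
  (exists r : ranking U, in_S grp ub r) ->
  (exists D : {ffun ranking U -> R},
      is_distr_on_S (in_S grp ub) D /\ forall u, lambda u <= expV f g D u)
  <->
  (forall X : {set U},
      exists2 r : ranking U, in_S grp ub r &
        \sum_(u in X) lambda u <= \sum_(u in X) V f g r u).
Proof.
move=> hf [r0 hr0]; split.
  move=> [D [[D0 [DS D1]] hD]] X.
  have [rm hrm hmax] := exmax (fun r => \sum_(u in X) V f g r u) hr0.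
  exists rm => //.
  apply: le_trans (_ : \sum_(u in X) expV f g D u <= _).
    by apply: ler_sum => u _; exact: hD.
  rewrite /expV exchange_big /=.
  apply: le_trans (_ : \sum_r D r * \sum_(u in X) V f g rm u <= _).
    apply: ler_sum => r _; rewrite -mulr_sumr.
    case: (boolP (in_S grp ub r)) => hr; last by rewrite DS // !mul0r.
    by apply: ler_wpM2l => //; apply: hmax.
  by rewrite -mulr_suml D1 mul1r.
move=> H.
have Hw : forall w : U -> R, (forall u, 0 <= w u) -> exists2 r, in_S grp ub r &
    0 <= \sum_(u in [set: U]) w u * (V f g r u - lambda u).
  move=> w hw.
  have [rs hrs hmax] := exmax (Phi w) hr0.
  exists rs => //.
  rewrite (eq_bigl xpredT); last by move=> u; rewrite in_setT.
  apply: (@abel R U #|[set u | (0 < w u)%R]|) => // th.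
  have [rX hrX hX] := H [set u | th <= w u].
  have cv : forall F : U -> R,
      \sum_(u in [set u | th <= w u]) F u = \sum_(u | th <= w u) F u.
    by move=> F; apply: eq_bigl => u; rewrite inE.
  rewrite !cv in hX.
  rewrite sumrB subr_ge0; apply: le_trans hX _.
  rewrite /V !sumrB lerD2r.
  apply: fcompare => // j.
  by apply: (top_opt (w := w) hrs) => // r hr; apply: hmax.
have [c [c0 cP c1 cX]] := @farkas R U #|[set: U]| [set: U] erefl (ranking U)
(in_S grp ub) (fun r u => V f g r u - lambda u)
Hw.
exists [ffun r => c r]; split.
  split; first by move=> r; rewrite ffunE.
  split; first by move=> r hr; rewrite ffunE cP.
  by under eq_bigr do rewrite ffunE.
move=> u; have := cX u (in_setT u).
under eq_bigr do rewrite mulrBr.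
rewrite sumrB -mulr_suml c1 mul1r subr_ge0 => h.
rewrite /expV; under eq_bigr do rewrite ffunE.
exact: h.
Qed.
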